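(* Let $D\subset\mathbb{R}^d$ ($d\ge 3$) be a bounded regular domain and let $f:\partial D\to\overline{\mathbb{R}}$. Suppose $h_1,h_2$ are harmonic functions on $D$ and $k_1,k_2:D\to\mathbb{R}_+$ are real-valued non-negative superharmonic functions on $D$ such that $h_1$ converges to $f$ controlled by $k_1$ and $h_2$ converges to $f$ controlled by $k_2$. Then $h_1=h_2$ on $D$. In particular, if $u$ is a harmonic function on $D$ which converges to $0$ controlled by a real-valued non-negative superharmonic function $k$ on $D$, then $u=0$ on $D$.
   Context: Controlled convergence: for $f:\partial D\to\overline{\mathbb{R}}$ and $h,k:D\to\mathbb{R}$ with $k\ge 0$, one says $h$ converges to $f$ controlled by $k$ if for every $A\subset D$ and every $y\in\partial D\cap\overline{A}$: (1) if $\limsup_{A\ni x\to y}k(x)<\infty$ then $f(y)\in\mathbb{R}$ and $f(y)=\lim_{A\ni x\to y}h(x)$; (2) if $\lim_{A\ni x\to y}k(x)=\infty$ then $\lim_{A\ni x\to y}\frac{h(x)}{1+k(x)}=0$. *)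

(* Defs.v *)
From HB Require Import structures.
From mathcomp Require Import all_boot all_order all_algebra.
From mathcomp Require Import all_classical all_reals all_analysis.
Set Implicit Arguments. Unset Strict Implicit. Unset Printing Implicit Defensive.
Import Order.TTheory GRing.Theory Num.Theory.
Import numFieldNormedType.Exports.
Local Open Scope classical_set_scope.
Local Open Scope ring_scope.

(* Points of R^d are row vectors 'rV[R]_d.  The canonical norm on 'rV is the
   max norm; it induces the usual topology.  Euclidean balls are defined
   explicitly with the Euclidean norm. *)

Section Defs.
Context {R : realType} {d : nat}.
Notation V := 'rV[R]_d.

Definition enorm (x : V) : R := Num.sqrt (\sum_(i < d) (x ord0 i) ^+ 2).

Definition eball (x0 : V) (r : R) : set V := [set x | enorm (x - x0) < r].
Definition ecball (x0 : V) (r : R) : set V := [set x | enorm (x - x0) <= r].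
Definition esphere (x0 : V) (r : R) : set V := [set x | enorm (x - x0) = r].

Definition ebasis (i : 'I_d) : V := delta_mx ord0 i.
Definition pderiv (i : 'I_d) (f : V -> R) : V -> R := fun x => 'D_(ebasis i) f x.

Definition C2_on (D : set V) (f : V -> R) : Prop :=
  forall x, D x ->
    differentiable f x /\
    forall i, differentiable (pderiv i f) x /\
      forall j, {for x, continuous (pderiv j (pderiv i f))}.

Definition harmonic_on (D : set V) (h : V -> R) : Prop :=
  C2_on D h /\ forall x, D x -> \sum_(i < d) pderiv i (pderiv i h) x = 0.

Definition superharmonic_on (D : set V) (u : V -> R) : Prop :=
  (forall x, D x -> forall e : R, 0 < e -> \forall y \near x, u x - e < u y) /\
  (forall (x0 : V) (r : R) (h : V -> R), 0 < r -> ecball x0 r `<=` D ->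
     {within ecball x0 r, continuous h} -> harmonic_on (eball x0 r) h ->
     (forall y, esphere x0 r y -> h y <= u y) ->
     forall y, eball x0 r y -> h y <= u y).

Definition bdry (D : set V) : set V := closure D `\` interior D.

Definition domain (D : set V) : Prop := open D /\ connected D /\ D !=set0.

Definition bounded_set (D : set V) : Prop :=
  exists M : R, forall x, D x -> `|x| <= M.

Definition regular_domain (D : set V) : Prop :=
  domain D /\ bounded_set D /\
  forall phi : V -> R, {within bdry D, continuous phi} ->
    exists h : V -> R, harmonic_on D h /\
      forall y, bdry D y -> h @ within D (nbhs y) --> phi y.

Definition controlled_conv (D : set V) (f : V -> \bar R) (h k : V -> R) : Prop :=
  forall (A : set V) (y : V), A `<=` D -> bdry D y -> closure A y ->
    ((exists M : R, \forall x \near within A (nbhs y), k x <= M) ->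
       exists l : R, f y = l%:E /\ h @ within A (nbhs y) --> l) /\
    (k @ within A (nbhs y) --> +oo ->
       (fun x => h x / (1 + k x)) @ within A (nbhs y) --> 0).

End Defs.

(* Main.v *)
Require Import Defs.
From HB Require Import structures.
From mathcomp Require Import all_boot all_order all_algebra.
From mathcomp Require Import all_classical all_reals all_analysis.
From mathcomp Require Import ring lra.
Import Order.TTheory GRing.Theory Num.Theory.
Import numFieldNormedType.Exports.
Local Open Scope classical_set_scope.
Local Open Scope ring_scope.
Set Implicit Arguments. Unset Strict Implicit. Unset Printing Implicit Defensive.


Section S.
Context {R : realType} {d : nat}.
Notation V := 'rV[R]_d.

Lemma is_derive_quad (g : V -> R) (y v : V) (c e : R) :
  (forall h : R, g (h *: v + y) = g y + h * c + h ^+ 2 * e) -> is_derive y v g c.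
Proof.
move=> hg.
have H : (fun h : R => h^-1 *: ((g \o shift y) (h *: v) - g y)) @ 0^' --> c.
  have E : {near 0^', (fun h : R => c + h * e) =1 (fun h : R => h^-1 *: ((g \o shift y) (h *: v) - g y))}.
    near=> h.
    have h0 : h != 0 by near: h; exact: nbhs_dnbhs_neq.
    rewrite /= hg /=.
    have -> : g y + h * c + h ^+ 2 * e - g y = h * (c + h * e) by ring.
    by rewrite scalerA mulVf // scale1r.
  apply: cvg_trans (near_eq_cvg E) _.
  have : (fun h : R => c + h * e) @ 0 --> c + 0 * e.
    by apply: cvgD; [exact: cvg_cst | apply: cvgMl; exact: cvg_id].
  rewrite mul0r addr0 => H0.
  exact: cvg_within_filter H0.
by apply: DeriveDef; [apply/cvg_ex; exists c | exact: cvg_lim].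
Unshelve. all: by end_near.
Qed.

Definition sq (p : V) (i : 'I_d) (y : V) : R := y ord0 i - p ord0 i.
Definition dl (i j : 'I_d) : R := (i == j)%:R.

Lemma sq_shift p i j h y : sq p i (h *: ebasis j + y) = sq p i y + h * dl i j.
Proof.
rewrite /sq /ebasis /dl !mxE eqxx /=.
ring.
Qed.

Lemma sum_sq_shift (s : 'I_d -> R) j h :
  \sum_(i < d) (s i + h * dl i j) ^+ 2 = \sum_(i < d) s i ^+ 2 + 2 * h * s j + h ^+ 2.
Proof.
rewrite (bigD1 j) //= [in RHS](bigD1 j) //= /dl eqxx.
rewrite (eq_bigr (fun i => s i ^+ 2)); last first.
  by move=> i /negbTE ->; rewrite mulr0 addr0.
rewrite mulr1. ring.
Qed.

Definition qf (p : V) (i0 : 'I_d) (c0 c1 c2 : R) (y : V) : R :=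
  c0 + c1 * sq p i0 y + c2 * (d%:R * (sq p i0 y) ^+ 2 - \sum_(i < d) (sq p i y) ^+ 2).

Definition dqf (p : V) (i0 : 'I_d) (c1 c2 : R) (j : 'I_d) (y : V) : R :=
  c1 * dl i0 j + c2 * (2 * d%:R * sq p i0 y * dl i0 j - 2 * sq p j y).

Lemma qf_shift p i0 c0 c1 c2 j h y :
  qf p i0 c0 c1 c2 (h *: ebasis j + y) =
  qf p i0 c0 c1 c2 y + h * dqf p i0 c1 c2 j y + h ^+ 2 * (c2 * (d%:R * dl i0 j ^+ 2 - 1)).
Proof.
rewrite /qf /dqf.
rewrite (eq_bigr (fun i => (sq p i y + h * dl i j) ^+ 2)); last by move=> i _; rewrite sq_shift.
rewrite sum_sq_shift sq_shift.
ring.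
Qed.

Lemma is_derive_qf p i0 c0 c1 c2 j y :
  is_derive y (ebasis j) (qf p i0 c0 c1 c2) (dqf p i0 c1 c2 j y).
Proof. apply: is_derive_quad => h; exact: qf_shift. Qed.

Lemma dqf_shift p i0 c1 c2 j k h y :
  dqf p i0 c1 c2 j (h *: ebasis k + y) =
  dqf p i0 c1 c2 j y + h * (c2 * (2 * d%:R * dl i0 k * dl i0 j - 2 * dl j k)) + h ^+ 2 * 0.
Proof. rewrite /dqf !sq_shift; ring. Qed.

Lemma is_derive_dqf p i0 c1 c2 j k y :
  is_derive y (ebasis k) (dqf p i0 c1 c2 j) (c2 * (2 * d%:R * dl i0 k * dl i0 j - 2 * dl j k)).
Proof. apply: is_derive_quad => h; exact: dqf_shift. Qed.


Lemma dD (f g : V -> R) y : differentiable f y -> differentiable g y ->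
  differentiable (fun x => f x + g x) y.
Proof. move=> df dg; exact: (differentiableD df dg). Qed.
Lemma dB (f g : V -> R) y : differentiable f y -> differentiable g y ->
  differentiable (fun x => f x - g x) y.
Proof. move=> df dg; exact: (differentiableB df dg). Qed.
Lemma dM (f g : V -> R) y : differentiable f y -> differentiable g y ->
  differentiable (fun x => f x * g x) y.
Proof. move=> df dg; exact: (differentiableM df dg). Qed.
Lemma dC (c : R) y : differentiable (fun _ : V => c) y.
Proof. exact: differentiable_cst. Qed.
Lemma dX2 (f : V -> R) y : differentiable f y -> differentiable (fun x => f x ^+ 2) y.
Proof. by move=> df; under eq_fun do rewrite expr2; exact: dM. Qed.
Lemma dsum (F : 'I_d -> V -> R) y : (forall i, differentiable (F i) y) ->
  differentiable (fun x => \sum_(i < d) F i x) y.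
Proof.
move=> dF; have -> : (fun x => \sum_(i < d) F i x) = \sum_(i < d) F i.
  by apply/funext => x; rewrite fct_sumE.
exact: differentiable_sum.
Qed.
Lemma dsq p i y : differentiable (sq p i) y.
Proof. rewrite /sq; apply: dB; [exact: differentiable_coord | exact: dC]. Qed.

Lemma differentiable_qf p i0 c0 c1 c2 y : differentiable (qf p i0 c0 c1 c2) y.
Proof.
rewrite /qf; apply: dD; [apply: dD; [exact: dC | apply: dM; [exact: dC| exact: dsq]]|].
apply: dM; first exact: dC.
apply: dB; [apply: dM; [exact: dC| apply: dX2; exact: dsq]|].
apply: dsum => i; apply: dX2; exact: dsq.
Qed.

Lemma differentiable_dqf p i0 c1 c2 j y : differentiable (dqf p i0 c1 c2 j) y.
Proof.
rewrite /dqf; apply: dD; first exact: dC.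
apply: dM; first exact: dC.
apply: dB; last by apply: dM; [exact: dC | exact: dsq].
apply: dM; [apply: dM; [exact: dC | exact: dsq] | exact: dC].
Qed.

Lemma pderiv_qf p i0 c0 c1 c2 j : pderiv j (qf p i0 c0 c1 c2) = dqf p i0 c1 c2 j.
Proof. apply/funext => y; rewrite /pderiv; exact: (@derive_val _ _ _ _ _ _ _ (is_derive_qf p i0 c0 c1 c2 j y)). Qed.

Lemma pderiv_dqf p i0 c1 c2 j k :
  pderiv k (dqf p i0 c1 c2 j) = fun _ => c2 * (2 * d%:R * dl i0 k * dl i0 j - 2 * dl j k).
Proof. apply/funext => y; rewrite /pderiv; exact: (@derive_val _ _ _ _ _ _ _ (is_derive_dqf p i0 c1 c2 j k y)). Qed.

Lemma harmonic_qf p i0 c0 c1 c2 (U : set V) : harmonic_on U (qf p i0 c0 c1 c2).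
Proof.
split.
  move=> x _; split; first exact: differentiable_qf.
  move=> i; rewrite pderiv_qf; split; first exact: differentiable_dqf.
  by move=> j; rewrite pderiv_dqf; exact: cst_continuous.
move=> x _.
under eq_bigr do rewrite pderiv_qf pderiv_dqf.
rewrite -mulr_sumr.
have -> : \sum_(i < d) (2 * d%:R * dl i0 i * dl i0 i - 2 * dl i i) =
          \sum_(i < d) (2 * d%:R * dl i0 i) - \sum_(i < d) 2.
  rewrite -sumrB; apply: eq_bigr => i _; rewrite /dl eqxx.
  by case: (i0 == i); rewrite ?mulr1 ?mulr0.
rewrite -mulr_sumr (bigD1 i0) //= big1 ?addr0; last first.
  by move=> i /negbTE; rewrite /dl eq_sym => ->.
rewrite /dl eqxx sumr_const card_ord.
by rewrite -[2 *+ d]mulr_natr mulr1 subrr mulr0.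
Qed.


Lemma near_eq_differentiable (f g : V -> R) x :
  (\forall y \near x, f y = g y) -> differentiable g x -> differentiable f x.
Proof.
move=> fg dg.
have fx : f x = g x by apply: nbhs_singleton fg.
have E : f \o shift x = cst (f x) + 'd g x +o_ 0 id.
  apply/eqaddoP => eps eps0.
  have /eqaddoP/(_ eps eps0) := diff_locally dg.
  have fg0 : \forall h \near (0 : V), f (h + x) = g (h + x).
    move/nbhs0P : fg; apply: filter_app; near=> h.
    by rewrite addrC.
  move=> HP; apply: (filter_app _ _ fg0); apply: (filter_app _ _ HP).
  apply: filterE => h.
  rewrite !fctE /= => + ->; by move: fx => /= ->.
have dfE : 'd f x = 'd g x :> (V -> R).
  apply: diff_unique; [exact: diff_continuous | exact: E].
apply/diff_locallyP; rewrite dfE; split; [exact: diff_continuous | exact: E].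
Unshelve. all: by end_near.
Qed.

Definition combo (a b c : R) (f g : V -> R) : V -> R := fun x => a * f x + b * g x + c.

Lemma derive_combo (f g : V -> R) y v a b c :
  derivable f y v -> derivable g y v ->
  'D_v (combo a b c f g) y = a * 'D_v f y + b * 'D_v g y.
Proof.
move=> df dg.
have -> : combo a b c f g = ((a \*: f) + (b \*: g)) + cst c.
  by apply/funext => x; rewrite /combo !fctE.
rewrite deriveD; last exact: derivable_cst.
  rewrite deriveD ?deriveZ ?derive_cst ?addr0 //; exact: derivableZ.
by apply: derivableD; exact: derivableZ.
Qed.

Lemma differentiable_combo (f g : V -> R) y a b c :
  differentiable f y -> differentiable g y -> differentiable (combo a b c f g) y.
Proof.
move=> df dg; rewrite /combo; apply: dD; last exact: dC.
by apply: dD; apply: dM => //; exact: dC.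
Qed.

Lemma continuous_combo (f g : V -> R) y a b c :
  {for y, continuous f} -> {for y, continuous g} -> {for y, continuous (combo a b c f g)}.
Proof.
move=> cf cg; rewrite /prop_for /continuous_at /combo.
apply: (@cvgD _ _ _ (nbhs y)); last exact: cvg_cst.
by apply: (@cvgD _ _ _ (nbhs y)); apply: (@cvgM _ _ (nbhs y)) => //; exact: cvg_cst.
Qed.

Lemma near_eq_continuous (f g : V -> R) x :
  (\forall y \near x, f y = g y) -> {for x, continuous g} -> {for x, continuous f}.
Proof.
move=> fg cg.
have fx : f x = g x by apply: nbhs_singleton fg.
rewrite /prop_for /continuous_at fx.
apply: cvg_trans cg.
apply: (@near_eq_cvg _ _ (nbhs x)); apply: filterS fg => y fy; by rewrite fy.
Qed.

Lemma harmonic_combo (U : set V) (f g : V -> R) a b c :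
  open U -> harmonic_on U f -> harmonic_on U g -> harmonic_on U (combo a b c f g).
Proof.
move=> oU [C2f Lf] [C2g Lg].
have pd1 i y : U y -> pderiv i (combo a b c f g) y = combo a b 0 (pderiv i f) (pderiv i g) y.
  move=> Uy; rewrite /pderiv derive_combo ?/combo ?addr0 //; apply: diff_derivable.
    by case: (C2f y Uy).
  by case: (C2g y Uy).
have nU x : U x -> \forall y \near x, U y.
  by move=> Ux; move: oU; rewrite openE => /(_ x Ux).
have pd1n i x : U x -> \forall y \near x,
    pderiv i (combo a b c f g) y = combo a b 0 (pderiv i f) (pderiv i g) y.
  by move=> Ux; apply: filterS (nU x Ux) => y Uy; exact: pd1.
have pd2 i j y : U y -> pderiv j (pderiv i (combo a b c f g)) y =
    combo a b 0 (pderiv j (pderiv i f)) (pderiv j (pderiv i g)) y.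
  move=> Uy; rewrite /pderiv.
  rewrite (@near_eq_derive _ _ _ _ (combo a b 0 (pderiv i f) (pderiv i g))); last first.
    exact: pd1n.
  rewrite derive_combo ?/combo ?addr0 //; apply: diff_derivable.
    by case: (C2f y Uy) => _ /(_ i) [].
  by case: (C2g y Uy) => _ /(_ i) [].
split.
  move=> x Ux; split.
    by apply: differentiable_combo; [case: (C2f x Ux)|case: (C2g x Ux)].
  move=> i; split.
    apply: near_eq_differentiable (pd1n i x Ux) _.
    apply: differentiable_combo.
      by case: (C2f x Ux) => _ /(_ i) [].
    by case: (C2g x Ux) => _ /(_ i) [].
  move=> j.
  apply: (near_eq_continuous (g := combo a b 0 (pderiv j (pderiv i f)) (pderiv j (pderiv i g)))).
    by apply: filterS (nU x Ux) => y Uy; exact: pd2.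
  apply: continuous_combo.
    by case: (C2f x Ux) => _ /(_ i) [] _ /(_ j).
  by case: (C2g x Ux) => _ /(_ i) [] _ /(_ j).
move=> x Ux.
rewrite (eq_bigr (fun i => combo a b 0 (pderiv i (pderiv i f)) (pderiv i (pderiv i g)) x)); last first.
  by move=> i _; exact: pd2.
rewrite /combo big_split /= big_split /= -!mulr_sumr Lf // Lg //.
by rewrite !mulr0 big1 // !addr0.
Qed.

End S.


Section T.
Context {R : realType} {d : nat}.
Notation V := 'rV[R]_d.

Lemma LG_neg (K : set V) (P : V -> R -> Prop) : compact K ->
  (forall y c c', c' <= c -> P y c -> P y c') ->
  (forall x, K x -> exists c, \forall y \near x, P y c) ->
  exists c, forall y, K y -> P y c.
Proof.
move=> /compact_near_coveringP cK Pmono loc.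
have := cK R (ninfty_nbhs R) (fun c y => P y c) _.
case.
- move=> x Kx; have [cx Hx] := loc x Kx.
  exists ([set y | P y cx], [set c | c <= cx]); first split => //.
    exact: nbhs_ninfty_le (num_real cx).
  by case=> y c /= [Py cle]; exact: Pmono Py.
- move=> M [_ HM]; exists (M - 1) => y Ky; apply: HM => //.
  by rewrite ltrBlDr ltrDl.
Qed.

Lemma LG_pos (K : set V) (P : V -> R -> Prop) (m : R) : compact K ->
  (forall y c c', c' <= c -> P y c -> P y c') ->
  (forall x, K x -> exists c, m < c /\ \forall y \near x, P y c) ->
  exists c, m < c /\ forall y, K y -> P y c.
Proof.
move=> /compact_near_coveringP cK Pmono loc.
have H : \forall c \near m^'+, K `<=` (fun y => P y c).
  apply: (cK R (m^'+) (fun c y => P y c)).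
  move=> x Kx; have [cx [mcx Hx]] := loc x Kx.
  exists ([set y | P y cx], [set c | c <= cx]); first split => //.
    exact: nbhs_right_le mcx.
  by case=> y c /= [Py cle]; exact: Pmono Py.
have H2 : \forall c \near m^'+, m < c /\ K `<=` (fun y => P y c).
  apply: filter_app (nbhs_right_gt m); apply: filter_app H.
  by apply: filterE => c HK Hm; split.
by have [c [mc Hc]] := filter_ex H2; exists c.
Qed.

Lemma lsc_min (K : set V) (w : V -> R) : compact K -> K !=set0 ->
  (forall x, K x -> forall e, 0 < e -> \forall y \near x, K y -> w x - e < w y) ->
  exists x0, K x0 /\ forall y, K y -> w x0 <= w y.
Proof.
move=> cK [p Kp] lsc.
have [c0 Hc0] : exists c, forall y, K y -> (K y -> c <= w y).
  apply: (@LG_neg K (fun y c => K y -> c <= w y) cK).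
    by move=> y c c' c'c H Ky; apply: le_trans c'c (H Ky).
  move=> x Kx; exists (w x - 1); apply: filterS (lsc x Kx 1 ltr01).
  by move=> y H Ky; apply: ltW; exact: H.
set E := w @` K.
have hlb : has_lbound E by exists c0 => _ [y Ky <-]; exact: Hc0.
have neE : nonempty E by exists (w p), p.
set m := inf E.
have mle y : K y -> m <= w y by move=> Ky; apply: ge_inf => //; exists y.
apply: contrapT => Hno.
have mlt x : K x -> m < w x.
  move=> Kx; rewrite lt_neqAle mle // andbT; apply/negP => /eqP mx.
  by apply: Hno; exists x; split => // y Ky; rewrite -mx; exact: mle.
have [c [mc Hc]] : exists c, m < c /\ forall y, K y -> (K y -> c <= w y).
  apply: (@LG_pos K (fun y c => K y -> c <= w y) m cK).
    by move=> y c c' c'c H Ky; apply: le_trans c'c (H Ky).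
  move=> x Kx; exists ((m + w x) / 2); split.
    by have := mlt x Kx; lra.
  have e0 : 0 < (w x - m) / 2 by have := mlt x Kx; lra.
  apply: filterS (lsc x Kx _ e0) => y H Ky; have := H Ky; lra.
have : c <= m by apply: lb_le_inf => // _ [y Ky <-]; exact: Hc.
lra.
Qed.

Lemma coord_le_norm (v : V) i : `|v ord0 i| <= `|v|.
Proof.
have /mapP[j Hj ->] : `|v ord0 i| \in [seq `|v x.1 x.2| | x : 'I_1 * 'I_d].
  by apply/mapP; exists (ord0, i) => //=; rewrite mem_enum.
by rewrite [leRHS]/Num.norm /= mx_normrE; apply/bigmax_geP; right => /=; exists j.
Qed.

Lemma norm_le_coord (v : V) c : 0 <= c -> (forall i, `|v ord0 i| <= c) -> `|v| <= c.
Proof.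
move=> c0 H; rewrite [leLHS]/Num.norm /= mx_normrE; apply/bigmax_leP; split => //.
by case=> i j _ /=; rewrite (ord1 i); exact: H.
Qed.

Definition N2 (v : V) : R := \sum_(i < d) (v ord0 i) ^+ 2.

Lemma N2_ge0 (v : V) : 0 <= N2 v.
Proof. by apply: sumr_ge0 => i _; exact: sqr_ge0. Qed.

Lemma coord_sq_le (v : V) i : (v ord0 i) ^+ 2 <= N2 v.
Proof.
rewrite /N2 (bigD1 i) //= lerDl; apply: sumr_ge0 => j _; exact: sqr_ge0.
Qed.

Lemma coord_le_enorm (v : V) i : `|v ord0 i| <= enorm v.
Proof.
rewrite /enorm -sqrtr_sqr; apply: ler_wsqrtr.
exact: coord_sq_le.
Qed.

Lemma norm_le_enorm (v : V) : `|v| <= enorm v.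
Proof. apply: norm_le_coord; [exact: sqrtr_ge0 | exact: coord_le_enorm]. Qed.

Lemma esphereE (x0 : V) r (y : V) : 0 <= r -> esphere x0 r y <-> N2 (y - x0) = r ^+ 2.
Proof.
move=> r0; rewrite /esphere /enorm -/(N2 _) /=; split.
  by move=> <-; rewrite sqr_sqrtr // N2_ge0.
by move=> H; rewrite -/(N2 _) H sqrtr_sqr ger0_norm.
Qed.

Lemma compact_of (A : set V) : (exists M, forall y, A y -> `|y| <= M) -> closed A -> compact A.
Proof.
move=> [M HM] cA; apply: bounded_closed_compact => //.
exists M; split; first exact: num_real.
by move=> x Mx y Ay; apply: le_trans (HM y Ay) _; exact: ltW.
Qed.

End T.


Section M.
Context {R : realType} {d : nat}.
Notation V := 'rV[R]_d.

Lemma near_ball (x : V) (e : R) : 0 < e -> \forall y \near x, `|x - y| < e.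
Proof. by move=> e0; apply/nbhs_normP; exists e => //= y. Qed.

Lemma near_ballP (x : V) (P : V -> Prop) :
  (\forall y \near x, P y) -> exists2 e, 0 < e & forall y, `|x - y| < e -> P y.
Proof. by move/nbhs_normP => [e e0 H]; exists e => // y Hy; apply: H. Qed.

Lemma open_bdry (D : set V) z : open D -> bdry D z <-> closure D z /\ ~ D z.
Proof.
move=> oD; have iD : interior D = D by apply/interior_id.
by rewrite /bdry iD.
Qed.

Lemma continuous_N2 (x0 : V) : continuous (fun y : V => N2 (y - x0)).
Proof.
move=> y; apply: differentiable_continuous.
have -> : (fun y : V => N2 (y - x0)) = (fun y => \sum_(i < d) (sq x0 i y) ^+ 2).
  by apply/funext => z; rewrite /N2; apply: eq_bigr => i _; rewrite /sq !mxE.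
apply: dsum => i; apply: dX2; exact: dsq.
Qed.

Lemma qfE (x0 : V) i0 c0 c1 c2 (y : V) :
  qf x0 i0 c0 c1 c2 y = c0 + c1 * (y ord0 i0 - x0 ord0 i0) +
    c2 * (d%:R * (y ord0 i0 - x0 ord0 i0) ^+ 2 - N2 (y - x0)).
Proof. by rewrite /qf /N2 /sq; congr (_ + _ * (_ - _)); apply: eq_bigr => i _; rewrite !mxE. Qed.

Lemma closure_sub (A : set V) z : closure A z -> forall (P : V -> Prop),
  (\forall y \near z, P y) -> exists y, A y /\ P y.
Proof. by move=> cz P HP; have [y [Ay Py]] := cz _ HP; exists y. Qed.

Lemma arith1 (r t D : R) : 0 < r -> 1 <= D -> t ^+ 2 <= r ^+ 2 -> t < r / (4 * D) ->
  D * r * t + D * t ^+ 2 <= r ^+ 2 / 2.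
Proof.
move=> r0 D1 tr ts.
have D0 : 0 < D by lra.
have tr' : t <= r by move: tr; rewrite !expr2 => tr; nra.
have rt : - r <= t by move: tr; rewrite !expr2 => tr; nra.
have [t0|t0] := leP t 0.
  have : D * t * (r + t) <= 0.
    by apply: mulr_le0_ge0; [rewrite pmulr_rle0 // | lra].
  have : 0 <= r ^+ 2 / 2 by apply: divr_ge0 => //; exact: sqr_ge0.
  rewrite expr2 => h1 h2; nra.
have Dt : D * t < r / 4.
  move: ts; rewrite ltr_pdivlMr ?mulr_gt0 // => h.
  rewrite ltr_pdivlMr //; nra.
have : D * t * (r + t) <= r / 4 * (r + r).
  apply: ler_pM; [nra| lra | exact: ltW | lra].
rewrite expr2; nra.
Qed.

Lemma minP_abstract (D : set V) (i0 : 'I_d) (w : V -> R) :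
  open D -> (exists M, forall y, D y -> `|y| <= M) ->
  (forall x, D x -> forall e, 0 < e -> \forall y \near x, w x - e < w y) ->
  (forall x0 r c0 c1 c2, 0 < r -> ecball x0 r `<=` D ->
     (forall y, esphere x0 r y -> qf x0 i0 c0 c1 c2 y <= w y) -> c0 <= w x0) ->
  (forall z, bdry D z -> forall del, 0 < del -> \forall y \near z, D y -> - del < w y) ->
  forall x, D x -> 0 <= w x.
Proof.
move=> oD [M hM] lsc cmp bd p Dp.
rewrite leNgt; apply/negP => wp0.
set c0 := w p.
set T := [set y | D y /\ w y <= c0].
have clT : closed T.
  move=> z clz.
  have [Dz|nDz] := pselect (D z).
    split => //; rewrite leNgt; apply/negP => czl.
    have e0 : 0 < w z - c0 by rewrite subr_gt0.
    have [y [[_ wyc] Hy]] := closure_sub clz (lsc z Dz _ e0).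
    by move: Hy; rewrite opprB addrC subrK => /(le_lt_trans wyc); rewrite ltxx.
  have bz : bdry D z.
    apply/(open_bdry z oD); split => //.
    by apply: (closureS _ clz) => y [].
  have del0 : 0 < - c0 / 2 by rewrite divr_gt0 // oppr_gt0.
  have [y [[Dy wyc] Hy]] := closure_sub clz (bd z bz _ del0).
  have := Hy Dy; move: wyc wp0; clearbody c0; lra.
have cT : compact T.
  by apply: compact_of => //; exists M => y [Dy _]; exact: hM.
have [x1 [Tx1 x1min]] : exists x1, T x1 /\ forall y, T y -> w x1 <= w y.
  apply: lsc_min => //; first by exists p; split.
  move=> x [Dx _] e e0; apply: filterS (lsc x Dx e e0) => y H _; exact: H.
set m := w x1.
have mc0 : m <= c0 by case: Tx1.
have mglob y : D y -> m <= w y.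
  move=> Dy; have [wyc|cwy] := leP (w y) c0; first by apply: x1min.
  by apply: le_trans mc0 (ltW cwy).
set S := [set y | T y /\ w y <= m].
have clS : closed S.
  move=> z clz.
  have Tz : T z by apply: clT; apply: (closureS _ clz) => y [].
  split => //; rewrite leNgt; apply/negP => czl.
  have e0 : 0 < w z - m by rewrite subr_gt0.
  have [y [[_ wym] Hy]] := closure_sub clz (lsc z (proj1 Tz) _ e0).
  by move: Hy; rewrite opprB addrC subrK => /(le_lt_trans wym); rewrite ltxx.
have cS : compact S.
  by apply: compact_of => //; exists M => y [[Dy _] _]; exact: hM.
have [x0 Sx0 x0max] : exists2 x0, x0 \in S & forall t, t \in S -> t ord0 i0 <= x0 ord0 i0.
  apply: compact_EVT_max => //; first by exists x1; split.
  apply: continuous_subspaceT; exact: coord_continuous.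
move: Sx0; rewrite inE => -[[Dx0 _] wx0m].
have wx0 : w x0 = m by apply/eqP; rewrite eq_le wx0m mglob.
have x0max' t : S t -> t ord0 i0 <= x0 ord0 i0 by move=> St; apply: x0max; rewrite inE.
have d0 : (0 < d)%N by apply: leq_ltn_trans (leq0n _) (ltn_ord i0).
have dR1 : 1 <= (d%:R : R) by rewrite ler1n.
have [e e0 He] : exists2 e : R, 0 < e & forall y, `|x0 - y| < e -> D y.
  by apply: near_ballP; move: oD; rewrite openE => /(_ x0 Dx0).
set r := e / 2.
have r0 : 0 < r by rewrite divr_gt0.
have ecD : ecball x0 r `<=` D.
  move=> y ey; apply: He; rewrite distrC.
  apply: le_lt_trans (norm_le_enorm _) _; apply: le_lt_trans ey _.
  by rewrite /r; lra.
have eE y : esphere x0 r y <-> N2 (y - x0) = r ^+ 2 by exact: (@esphereE R d x0 r y (ltW r0)).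
have esD y : esphere x0 r y -> D y.
  by move=> ey; apply: ecD; rewrite /ecball /= ey.
set sig := r / (4 * d%:R).
set K2 := [set y | esphere x0 r y /\ x0 ord0 i0 + sig <= y ord0 i0].
have [eta eta0 Heta] : exists2 eta, 0 < eta & forall y, K2 y -> m + eta <= w y.
  have [[y0 K2y0]|nK2] := pselect (K2 !=set0); last first.
    by exists 1 => // y K2y; exfalso; apply: nK2; exists y.
  have cK2 : compact K2.
    apply: compact_of.
      exists (`|x0| + r) => y [ey _].
      rewrite -[y](subrK x0) (le_trans (ler_normD _ _)) // addrC lerD2l.
      by apply: le_trans (norm_le_enorm _) _; rewrite ey.
    have -> : K2 = (fun y => N2 (y - x0)) @^-1` [set u | u = r ^+ 2] `&`
                  (fun y : V => y ord0 i0) @^-1` [set u | x0 ord0 i0 + sig <= u].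
      apply/seteqP; split => y /=.
        by move=> [/(eE y) ey Hy]; split.
      by move=> [ey Hy]; split => //; apply/(eE y).
    apply: closedI.
      apply: preimage_closed; last exact: closed_eq.
      by move=> y _; exact: continuous_N2.
    apply: preimage_closed; last exact: closed_ge.
    by move=> y _; exact: coord_continuous.
  have [x2 [K2x2 x2min]] : exists x2, K2 x2 /\ forall y, K2 y -> w x2 <= w y.
    apply: lsc_min => //; first by exists y0.
    move=> x [ex _] e' e'0; apply: filterS (lsc x (esD _ ex) e' e'0) => y H _; exact: H.
  exists (w x2 - m); last by move=> y K2y; rewrite addrC subrK; exact: x2min.
  rewrite subr_gt0 lt_neqAle mglob ?andbT; last by case: K2x2 => /esD.
  apply/negP => /eqP mx2.
  have Sx2 : S x2.
    split; last by rewrite -mx2.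
    by split; [case: K2x2 => /esD | rewrite -mx2].
  have := x0max' _ Sx2; case: K2x2 => _.
  have : 0 < sig by rewrite divr_gt0 // mulr_gt0 // ltr0n.
  lra.
set tau := r ^+ 2 / 2.
set del := eta / (2 * d%:R * r ^+ 2 + r ^+ 2).
have den0 : 0 < 2 * d%:R * r ^+ 2 + r ^+ 2.
  by apply: addr_gt0; [rewrite !mulr_gt0 // ?ltr0n // exprn_gt0 | rewrite exprn_gt0].
have del0 : 0 < del by rewrite divr_gt0.
have tau0 : 0 < tau by rewrite divr_gt0 // exprn_gt0.
have := cmp x0 r (m + del * tau) (del * (d%:R * r)) del r0 ecD.
have -> : w x0 = m by [].
suff Hq : forall y, esphere x0 r y -> qf x0 i0 (m + del * tau) (del * (d%:R * r)) del y <= w y.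
  move=> /(_ Hq); have : 0 < del * tau by rewrite mulr_gt0.
  lra.
move=> y ey.
rewrite qfE.
have N2r : N2 (y - x0) = r ^+ 2 by apply/(eE y).
rewrite N2r.
set t := y ord0 i0 - x0 ord0 i0.
have t2 : t ^+ 2 <= r ^+ 2 by rewrite -N2r; have := coord_sq_le (y - x0) i0; rewrite !mxE.
have [ts|st] := ltP (y ord0 i0) (x0 ord0 i0 + sig).
  apply: le_trans (mglob _ (esD _ ey)).
  have ts' : t < r / (4 * d%:R) by rewrite -/sig /t; move: ts; clearbody sig; lra.
  have := arith1 r0 dR1 t2 ts'.
  move=> h.
  have : del * (tau + d%:R * r * t + (d%:R * t ^+ 2 - r ^+ 2)) <= 0.
    by apply: mulr_ge0_le0; [exact: ltW | rewrite /tau; lra].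
  lra.
apply: le_trans (Heta y (conj ey st)).
have tr' : t <= r by move: t2; rewrite !expr2 => t2; nra.
have ht : d%:R * r * t <= d%:R * r ^+ 2.
  by rewrite expr2 mulrA ler_pM2l // mulr_gt0 // ltr0n.
have ht2 : d%:R * t ^+ 2 <= d%:R * r ^+ 2 by rewrite ler_pM2l // ltr0n.
have : del * (tau + d%:R * r * t + (d%:R * t ^+ 2 - r ^+ 2)) <= del * (2 * d%:R * r ^+ 2 + r ^+ 2).
  by rewrite ler_pM2l //; rewrite /tau; have := sqr_ge0 r; lra.
rewrite /del mulrAC divfK ?gt_eqF //.
lra.
Qed.

Lemma harmonic_sub (U U' : set V) f : U' `<=` U -> harmonic_on U f -> harmonic_on U' f.
Proof. by move=> sub [C2 L]; split => x /sub Ux; [exact: C2 | exact: L]. Qed.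

Lemma qf_center (x0 : V) i0 c0 c1 c2 : qf x0 i0 c0 c1 c2 x0 = c0.
Proof.
rewrite qfE subrr /N2 big1; last by move=> i _; rewrite !mxE subrr expr0n.
ring.
Qed.

Lemma minP (D : set V) (i0 : 'I_d) (k G : V -> R) (eps : R) :
  open D -> (exists M, forall y, D y -> `|y| <= M) -> 0 < eps ->
  superharmonic_on D k -> harmonic_on D G ->
  (forall z, bdry D z -> forall del, 0 < del -> \forall y \near z, D y -> - del < eps * k y + G y) ->
  forall x, D x -> 0 <= eps * k x + G x.
Proof.
move=> oD bD eps0 [klsc kcmp] hG bd.
have Gc x : D x -> {for x, continuous G}.
  by move=> Dx; apply: differentiable_continuous; case: hG => /(_ x Dx) [].
apply: (@minP_abstract D i0 (fun x => eps * k x + G x) oD bD) => //.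
- move=> x Dx e e0.
  have e1 : 0 < e / (2 * eps) by rewrite divr_gt0 // mulr_gt0.
  have e2 : 0 < e / 2 by rewrite divr_gt0.
  have hG2 : \forall y \near x, `|G x - G y| < e / 2.
    have := Gc x Dx; move=> /cvgrPdist_lt /(_ _ e2); by [].
  apply: filter_app hG2; apply: filterS (klsc x Dx _ e1) => y hk hg.
  have h3 : eps * k x - e / 2 < eps * k y.
    have -> : eps * k x - e / 2 = eps * (k x - e / (2 * eps)).
      by field; rewrite gt_eqF.
    by rewrite ltr_pM2l.
  move: hg; rewrite ltr_norml => /andP [h1 h2].
  lra.
- move=> x0 r c0 c1 c2 r0 ecD hq.
  set h := combo (eps^-1) (- eps^-1) 0 (qf x0 i0 c0 c1 c2) G.
  have eD : eball x0 r `<=` D by move=> y ey; apply: ecD; rewrite /ecball /=; exact: ltW.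
  have hh : harmonic_on (eball x0 r) h.
    apply: harmonic_sub eD _; apply: harmonic_combo => //; exact: harmonic_qf.
  have hc : {within ecball x0 r, continuous h}.
    apply: continuous_in_subspaceT => y; rewrite inE => /ecD Dy.
    apply: differentiable_continuous; apply: differentiable_combo.
      exact: differentiable_qf.
    by case: hG => /(_ y Dy) [].
  have hle : forall y, esphere x0 r y -> h y <= k y.
    move=> y ey; rewrite /h /combo addr0 mulNr -mulrBr mulrC.
    rewrite ler_pdivrMr // mulrC; have := hq y ey; lra.
  have := kcmp x0 r h r0 ecD hc hh hle x0.
  have ex0 : eball x0 r x0.
    by rewrite /eball /enorm /= subrr big1 ?sqrtr0 // => i _; rewrite mxE expr0n.
  move=> /(_ ex0); rewrite /h /combo addr0 qf_center mulNr -mulrBr mulrC.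
  by rewrite ler_pdivrMr // mulrC; lra.
Qed.

End M.


Section C.
Context {R : realType} {d : nat}.
Notation V := 'rV[R]_d.

Lemma not_near_closure (P : V -> Prop) z :
  ~ (\forall x \near z, P x) -> closure [set x | ~ P x] z.
Proof.
move=> nP B nbB; apply: contrapT => empty; apply: nP.
apply: filterS nbB => x Bx; apply: contrapT => nPx; apply: empty; by exists x; split.
Qed.

Lemma not_closure_near (A : set V) z :
  ~ closure A z -> \forall x \near z, ~ A x.
Proof.
move=> ncl; apply: contrapT => nn; apply: ncl => B nbB.
apply: contrapT => empty; apply: nn; apply: filterS nbB => x Bx Ax.
by apply: empty; exists x.
Qed.

Lemma ctrl_contra (D : set V) (f : V -> \bar R) (h k : V -> R) (A : set V) z (c eps : R) :
  controlled_conv D f h k -> (forall x, D x -> 0 <= k x) -> A `<=` D -> bdry D z ->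
  closure A z -> 0 < eps -> (forall x, A x -> c + eps * k x < h x) ->
  (forall l : R, f z = l%:E -> l < c) -> False.
Proof.
move=> cc k0 AD bz clA eps0 Ah fc.
have [[M clM]|nb] := pselect (exists M, closure (A `&` [set x | k x <= M]) z).
  set A' := A `&` [set x | k x <= M].
  have [H1 _] := cc A' z (fun x Ax => AD x (proj1 Ax)) bz clM.
  have [l [fzl hl]] : exists l : R, f z = l%:E /\ h @ within A' (nbhs z) --> l.
    by apply: H1; exists M; rewrite near_withinE; apply: filterE => x [].
  have lc := fc l fzl.
  have PF : ProperFilter (within A' (nbhs z)) by apply: within_nbhs_proper.
  have e0 : 0 < c - l by rewrite subr_gt0.
  move/cvgrPdist_lt : hl => /(_ _ e0) H2.
  have H3 : \forall x \near within A' (nbhs z), c < h x.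
    rewrite near_withinE; apply: filterE => x [Ax _]; apply: le_lt_trans (Ah x Ax).
    by rewrite lerDl; apply: mulr_ge0; [exact: ltW | apply: k0; exact: AD].
  have [x [h1 h2]] := filter_ex (filterI H2 H3).
  move: h1; rewrite ltr_norml => /andP [h1 _].
  lra.
have kinf : k @ within A (nbhs z) --> +oo.
  apply/cvgryPge => M.
  have : ~ closure (A `&` [set x | k x <= M]) z by move=> H; apply: nb; exists M.
  move/not_closure_near; apply: filterS => x H Ax.
  by rewrite leNgt; apply/negP => kM; apply: H; split => //; exact: ltW.
have [_ H2] := cc A z AD bz clA.
have hk := H2 kinf.
have PF : ProperFilter (within A (nbhs z)) by apply: within_nbhs_proper.
have e2 : 0 < eps / 2 by rewrite divr_gt0.
move/cvgrPdist_lt : hk => /(_ _ e2) H4.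
move/cvgryPge : kinf => /(_ ((eps / 2 - c) * 2 / eps)) H5.
have H6 : \forall x \near within A (nbhs z), A x by exact: withinT.
have [x [[h4 h5] Ax]] := filter_ex (filterI (filterI H4 H5) H6).
have kx0 : 0 <= k x by apply: k0; exact: AD.
have hx := Ah x Ax.
have k1 : 0 < 1 + k x by lra.
move: h4; rewrite sub0r normrN ltr_norml => /andP [_].
rewrite ltr_pdivrMr // => h4.
move: h5; rewrite ler_pdivrMr // => h5.
nra.
Qed.

Lemma ctrl_L1 (D : set V) (f : V -> \bar R) (h k : V -> R) z (eps l : R) :
  controlled_conv D f h k -> (forall x, D x -> 0 <= k x) -> bdry D z -> 0 < eps ->
  f z = l%:E -> \forall x \near z, D x -> eps / 4 - l <= eps / 2 + eps * k x - h x.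
Proof.
move=> cc k0 bz eps0 fz; apply: contrapT => nn.
have clA := not_near_closure nn.
apply: (@ctrl_contra D f h k _ z (eps / 4 + l) eps cc k0 _ bz clA eps0).
- by move=> x /= H; apply: contrapT => nD; apply: H => Dx; exfalso; exact: nD.
- move=> x /= H.
  have Dx : D x by apply: contrapT => nD; apply: H => Dx; exfalso; exact: nD.
  have : ~ (eps / 4 - l <= eps / 2 + eps * k x - h x) by move=> H'; apply: H.
  by move/negP; rewrite -ltNge => H'; lra.
- by move=> l' ; rewrite fz => -[<-]; lra.
Qed.

Lemma ctrl_L2 (D : set V) (f : V -> \bar R) (h k : V -> R) z (eps : R) :
  controlled_conv D f h k -> (forall x, D x -> 0 <= k x) -> bdry D z -> 0 < eps ->
  (forall l : R, f z <> l%:E) -> \forall x \near z, D x -> 0 <= eps / 2 + eps * k x - h x.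
Proof.
move=> cc k0 bz eps0 fz; apply: contrapT => nn.
have clA := not_near_closure nn.
apply: (@ctrl_contra D f h k _ z (eps / 2) eps cc k0 _ bz clA eps0).
- by move=> x /= H; apply: contrapT => nD; apply: H => Dx; exfalso; exact: nD.
- move=> x /= H.
  have : ~ (0 <= eps / 2 + eps * k x - h x).
    by move=> H'; apply: H => _.
  by move/negP; rewrite -ltNge => H'; lra.
- by move=> l' /fz.
Qed.

Lemma ctrl_opp (D : set V) (f : V -> \bar R) (h k : V -> R) :
  controlled_conv D f h k -> controlled_conv D (fun y => - f y)%E (fun x => - h x) k.
Proof.
move=> cc A y AD bz clA; have [H1 H2] := cc A y AD bz clA; split.
  move=> /H1 [l [fl hl]]; exists (- l); split; first by rewrite fl.
  exact: cvgN.
move=> /H2 hk.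
have -> : (fun x => - h x / (1 + k x)) = (fun x => - (h x / (1 + k x))).
  by apply/funext => x; rewrite mulNr.
by rewrite -oppr0; exact: cvgN.
Qed.

End C.


Section A.
Context {R : realType} {d : nat}.
Notation V := 'rV[R]_d.

Lemma lsc_comb (D : set V) (k G : V -> R) (eps : R) :
  0 < eps -> superharmonic_on D k -> (forall x, D x -> {for x, continuous G}) ->
  forall x, D x -> forall e, 0 < e -> \forall y \near x, eps * k x + G x - e < eps * k y + G y.
Proof.
move=> eps0 [klsc _] Gc x Dx e e0.
have e1 : 0 < e / (2 * eps) by rewrite divr_gt0 // mulr_gt0.
have e2 : 0 < e / 2 by rewrite divr_gt0.
have hG2 : \forall y \near x, `|G x - G y| < e / 2.
  by have := Gc x Dx; move=> /cvgrPdist_lt /(_ _ e2).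
apply: filter_app hG2; apply: filterS (klsc x Dx _ e1) => y hk hg.
have h3 : eps * k x - e / 2 < eps * k y.
  have -> : eps * k x - e / 2 = eps * (k x - e / (2 * eps)).
    by field; rewrite gt_eqF.
  by rewrite ltr_pM2l.
move: hg; rewrite ltr_norml => /andP [h1 h2].
lra.
Qed.

Lemma local_pair (D : set V) (f : V -> \bar R) (h1 h2 k1 k2 : V -> R) z (eps : R) :
  controlled_conv D f h1 k1 -> controlled_conv D f h2 k2 ->
  (forall x, D x -> 0 <= k1 x) -> (forall x, D x -> 0 <= k2 x) -> bdry D z -> 0 < eps ->
  exists ba bb : R, 0 <= ba + bb /\
    (\forall x \near z, D x -> ba <= eps / 2 + eps * k1 x - h1 x) /\
    (\forall x \near z, D x -> bb <= eps / 2 + eps * k2 x + h2 x).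
Proof.
move=> c1 c2 k10 k20 bz eps0.
have c2' := ctrl_opp c2.
have [[l fl]|nf] := pselect (exists l : R, f z = l%:E).
  exists (eps / 4 - l); exists (eps / 4 + l).
  split; first by lra.
  split; first exact: ctrl_L1 c1 k10 bz eps0 fl.
  have fl' : (- f z)%E = (- l)%:E by rewrite fl.
  have := ctrl_L1 c2' k20 bz eps0 fl'.
  move=> HP; apply: (filterS _ HP) => x H Dx; have := H Dx; by rewrite !opprK.
exists 0; exists 0.
split; first by lra.
have nf' l : f z <> l%:E by move=> H; apply: nf; exists l.
split; first exact: ctrl_L2 c1 k10 bz eps0 nf'.
have nf2 l : (- f z)%E <> l%:E.
  by move=> H; apply: (nf' (- l)); rewrite -[f z]oppeK H.
have := ctrl_L2 c2' k20 bz eps0 nf2.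
move=> HP; apply: (filterS _ HP) => x H Dx; have := H Dx; by rewrite !opprK.
Qed.

End A.


Section B.
Context {R : realType} {d : nat}.
Notation V := 'rV[R]_d.

Lemma main_ineq (i0 : 'I_d) (D : set V) (hD : regular_domain D)
  (f : V -> \bar R) (h1 h2 k1 k2 : V -> R) :
  harmonic_on D h1 -> harmonic_on D h2 ->
  (forall x, D x -> 0 <= k1 x) -> superharmonic_on D k1 ->
  (forall x, D x -> 0 <= k2 x) -> superharmonic_on D k2 ->
  controlled_conv D f h1 k1 -> controlled_conv D f h2 k2 ->
  forall eps, 0 < eps -> forall x, D x -> 0 <= eps + eps * k1 x + eps * k2 x - h1 x + h2 x.
Proof.
move=> hh1 hh2 k10 sk1 k20 sk2 c1 c2 eps eps0.
case: hD => [[oD [_ [p Dp]]] [[M hM] dir]].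
have bD : exists M, forall y, D y -> `|y| <= M by exists M.
set a := fun x => eps / 2 + eps * k1 x - h1 x.
set b := fun x => eps / 2 + eps * k2 x + h2 x.
have h1c x : D x -> {for x, continuous h1}.
  by move=> Dx; apply: differentiable_continuous; case: hh1 => /(_ x Dx) [].
have h2c x : D x -> {for x, continuous h2}.
  by move=> Dx; apply: differentiable_continuous; case: hh2 => /(_ x Dx) [].
have alsc : forall x, D x -> forall e, 0 < e -> \forall y \near x, a x - e < a y.
  move=> x Dx e e0.
  have := lsc_comb (G := fun y => eps / 2 - h1 y) eps0 sk1 _ Dx e0.
  have Gc y : D y -> {for y, continuous (fun y => eps / 2 - h1 y)}.
    move=> Dy; apply: (@cvgB _ _ _ (nbhs y)); [exact: cvg_cst | exact: h1c].
  move=> /(_ Gc); apply: filterS => y; rewrite /a; lra.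
have blsc : forall x, D x -> forall e, 0 < e -> \forall y \near x, b x - e < b y.
  move=> x Dx e e0.
  have := lsc_comb (G := fun y => eps / 2 + h2 y) eps0 sk2 _ Dx e0.
  have Gc y : D y -> {for y, continuous (fun y => eps / 2 + h2 y)}.
    move=> Dy; apply: (@cvgD _ _ _ (nbhs y)); [exact: cvg_cst | exact: h2c].
  move=> /(_ Gc); apply: filterS => y; rewrite /b; lra.
have loc z : bdry D z -> exists ba bb : R, 0 <= ba + bb /\
    (\forall x \near z, D x -> ba <= a x) /\ (\forall x \near z, D x -> bb <= b x).
  by move=> bz; exact: local_pair c1 c2 k10 k20 bz eps0.
have bdE z : bdry D z <-> closure D z /\ ~ D z by exact: (@open_bdry R d D z oD).
have clB z : closure D z -> `|z| <= M + 1.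
  move=> cz; have [y [Dy Hy]] := closure_sub cz (near_ball z ltr01).
  rewrite -[z](subrK y) (le_trans (ler_normD _ _)) // addrC lerD //; first exact: hM.
  exact: ltW.
have cclD : compact (closure D).
  apply: compact_of; [by exists (M + 1) | exact: closed_closure].
have cbD : compact (bdry D).
  apply: compact_of; first by exists (M + 1) => y /bdE [cy _]; exact: clB.
  have -> : bdry D = closure D `&` ~` D by apply/seteqP; split => y /bdE.
  by apply: closedI; [exact: closed_closure | exact: open_closedC].
have lowb (w : V -> R) : (forall x, D x -> forall e, 0 < e -> \forall y \near x, w x - e < w y) ->
    (forall z, bdry D z -> exists c, \forall x \near z, D x -> c <= w x) ->
    exists C, 0 <= C /\ forall y, D y -> - C <= w y.
  move=> wl wb.
  have [c Hc] : exists c, forall y, closure D y -> (D y -> c <= w y).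
    apply: (@LG_neg R d (closure D) (fun y c => D y -> c <= w y) cclD).
      by move=> y c c' c'c H Dy; apply: le_trans c'c (H Dy).
    move=> z cz; have [Dz|nDz] := pselect (D z).
      exists (w z - 1); apply: filterS (wl z Dz 1 ltr01) => y H _; exact: ltW.
    by apply: wb; apply/bdE.
  exists `|c|; split => // y Dy; apply: le_trans (Hc y _ Dy).
    by rewrite lerNl -normrN ler_norm.
  by apply: subset_closure.
have [Ca [Ca0 Hca]] : exists C, 0 <= C /\ forall y, D y -> - C <= a y.
  apply: lowb => // z bz; have [ba [bb [_ [Ha _]]]] := loc z bz; by exists ba.
have [Cb [Cb0 Hcb]] : exists C, 0 <= C /\ forall y, D y -> - C <= b y.
  apply: lowb => // z bz; have [ba [bb [_ [_ Hb]]]] := loc z bz; by exists bb.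
have [rho [rho0 Leb]] : exists rho, 0 < rho /\ forall z, bdry D z ->
    forall x x', D x -> D x' -> `|z - x| < rho -> `|z - x'| < rho -> 0 <= a x + b x'.
  apply: (@LG_pos R d (bdry D) (fun y rho => forall x x', D x -> D x' -> `|y - x| < rho -> `|y - x'| < rho -> 0 <= a x + b x') 0 cbD).
    move=> y c c' c'c H x x' Dx Dx' h1' h2'.
    by apply: H => //; apply: lt_le_trans c'c.
  move=> z bz; have [ba [bb [bab [Ha Hb]]]] := loc z bz.
  have [ea ea0 Hea] := near_ballP Ha.
  have [eb eb0 Heb] := near_ballP Hb.
  set e := Num.min ea eb.
  have e0 : 0 < e by rewrite lt_min ea0 eb0.
  exists (e / 2); split; first by rewrite divr_gt0.
  apply: filterS (near_ball z (divr_gt0 e0 (ltr0Sn _ 1))) => y zy x x' Dx Dx' yx yx'.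
  have zx : `|z - x| < e.
    rewrite -[z - x](subrKA y) (le_lt_trans (ler_normD _ _)) //.
    by move: zy yx; rewrite /e; lra.
  have zx' : `|z - x'| < e.
    rewrite -[z - x'](subrKA y) (le_lt_trans (ler_normD _ _)) //.
    by move: zy yx'; rewrite /e; lra.
  have : ba <= a x by apply: Hea => //; apply: lt_le_trans zx _; rewrite ge_min lexx.
  have : bb <= b x' by apply: Heb => //; apply: lt_le_trans zx' _; rewrite ge_min lexx orbT.
  lra.
set L := (Ca + Cb) / rho.
have L0 : 0 <= L by rewrite divr_ge0 // ?addr_ge0 // ltW.
have LE : L * rho = Ca + Cb by rewrite /L divfK // gt_eqF.
set E := fun y : V => [set b x' + L * `|y - x'| | x' in D].
set phi := fun y => inf (E y).
have Elb y : has_lbound (E y).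
  exists (- Cb) => _ [x' Dx' <-].
  by apply: le_trans (Hcb x' Dx') _; rewrite lerDl mulr_ge0.
have Ene y : nonempty (E y) by exists (b p + L * `|y - p|), p.
have phi_le y x' : D x' -> phi y <= b x' + L * `|y - x'|.
  by move=> Dx'; apply: ge_inf => //; exists x'.
have phi_ge y c : (forall x', D x' -> c <= b x' + L * `|y - x'|) -> c <= phi y.
  by move=> H; apply: lb_le_inf => // _ [x' Dx' <-]; exact: H.
have phi_lip y y' : phi y <= phi y' + L * `|y - y'|.
  rewrite -lerBlDr; apply: phi_ge => x' Dx'.
  rewrite lerBlDr; apply: le_trans (phi_le y x' Dx') _.
  have tri : `|y - x'| <= `|y' - x'| + `|y - y'|.
    have -> : y - x' = (y' - x') + (y - y') by rewrite [RHS]addrC [RHS]addrA subrK.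
    exact: ler_normD.
  have := ler_wpM2l L0 tri; rewrite mulrDr; lra.
have phic : continuous phi.
  move=> y; apply/(@cvgrPdist_lt _ _ _ (nbhs y) _ phi (phi y)) => e e0.
  have e1 : 0 < e / (L + 1) by rewrite divr_gt0 // ltr_wpDl.
  apply: filterS (near_ball y e1) => y' yy'.
  have h1' := phi_lip y y'; have h2' := phi_lip y' y.
  rewrite distrC in h2'.
  have : L * `|y - y'| < e.
    apply: le_lt_trans (_ : L * `|y - y'| <= (L + 1) * `|y - y'|) _.
      by rewrite ler_wpM2r // lerDl.
    by rewrite mulrC -ltr_pdivlMr // ltr_wpDl.
  rewrite ltr_norml; move=> h3; apply/andP; split; lra.
have phiw : {within bdry D, continuous phi} by apply: continuous_subspaceT.
have [H [hH Hlim]] := dir phi phiw.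
have Hc x : D x -> {for x, continuous H}.
  by move=> Dx; apply: differentiable_continuous; case: hH => /(_ x Dx) [].
have Hnear z del : bdry D z -> 0 < del -> \forall y \near z, D y -> `|phi z - H y| < del.
  move=> bz del0; have := Hlim z bz; move/cvgrPdist_lt => /(_ _ del0).
  by rewrite near_withinE.
have Ba : forall z, bdry D z -> forall del, 0 < del ->
    \forall y \near z, D y -> - del < eps * k1 y + combo (-1) 1 (eps / 2) h1 H y.
  move=> z bz del del0.
  apply: filter_app (Hnear z del bz del0); apply: filterS (near_ball z rho0) => y zy Hy Dy.
  have := Hy Dy; rewrite ltr_norml => /andP [hy1 hy2].
  have : 0 <= a y + phi z.
    rewrite -lerBlDl sub0r; apply: phi_ge => x' Dx'.
    have [zx'|zx'] := ltP `|z - x'| rho.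
      have := Leb z bz y x' Dy Dx' zy zx'.
      have : 0 <= L * `|z - x'| by rewrite mulr_ge0.
      lra.
    have : Ca + Cb <= L * `|z - x'| by rewrite -LE ler_wpM2l.
    have := Hca y Dy; have := Hcb x' Dx'.
    lra.
  rewrite /combo /a; lra.
have Bb : forall z, bdry D z -> forall del, 0 < del ->
    \forall y \near z, D y -> - del < eps * k2 y + combo 1 (-1) (eps / 2) h2 H y.
  move=> z bz del del0.
  have del2 : 0 < del / 2 by rewrite divr_gt0.
  have del3 : 0 < del / 2 / (L + 1) by rewrite divr_gt0 // ltr_wpDl.
  apply: filter_app (Hnear z _ bz del2); apply: filterS (near_ball z del3) => y zy Hy Dy.
  have := Hy Dy; rewrite ltr_norml => /andP [hy1 hy2].
  have := phi_le z y Dy.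
  have : L * `|z - y| < del / 2.
    apply: le_lt_trans (_ : L * `|z - y| <= (L + 1) * `|z - y|) _.
      by rewrite ler_wpM2r // lerDl.
    by rewrite mulrC -ltr_pdivlMr // ltr_wpDl.
  rewrite /combo /b; lra.
have := @minP R d D i0 k1 (combo (-1) 1 (eps / 2) h1 H) eps oD bD eps0 sk1
  (harmonic_combo _ _ _ oD hh1 hH) Ba.
have := @minP R d D i0 k2 (combo 1 (-1) (eps / 2) h2 H) eps oD bD eps0 sk2
  (harmonic_combo _ _ _ oD hh2 hH) Bb.
move=> m2 m1 x Dx; have := m1 x Dx; have := m2 x Dx.
rewrite /combo; lra.
Qed.

End B.

Unset Implicit Arguments.

Lemma eps_le (R : realType) (a b k1 k2 : R) : 0 <= k1 -> 0 <= k2 ->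
  (forall eps : R, 0 < eps -> 0 <= eps + eps * k1 + eps * k2 - a + b) -> a <= b.
Proof.
move=> k10 k20 H; rewrite leNgt; apply/negP => ba.
have s0 : 0 < 1 + k1 + k2 by lra.
have e0 : 0 < (a - b) / (2 * (1 + k1 + k2)).
  by rewrite divr_gt0 ?mulr_gt0 // subr_gt0.
have := H _ e0.
have -> : (a - b) / (2 * (1 + k1 + k2)) + (a - b) / (2 * (1 + k1 + k2)) * k1 +
  (a - b) / (2 * (1 + k1 + k2)) * k2 = (a - b) / 2.
  by field; rewrite gt_eqF.
lra.
Qed.

Lemma harmonic0 (R : realType) (d : nat) (i0 : 'I_d) (D : set 'rV[R]_d) :
  harmonic_on D (fun _ => 0).
Proof.
have -> : (fun _ : 'rV[R]_d => 0 : R) = qf 0 i0 0 0 0.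
  by apply/funext => y; rewrite /qf; ring.
exact: harmonic_qf.
Qed.

Lemma ctrl0 (R : realType) (d : nat) (D : set 'rV[R]_d) (k : 'rV[R]_d -> R) :
  controlled_conv D (fun _ => 0%E) (fun _ => 0) k.
Proof.
move=> A y AD bz clA; split.
  by move=> _; exists 0; split => //; exact: cvg_cst.
move=> _; have -> : (fun x : 'rV[R]_d => 0 / (1 + k x)) = (fun _ => 0).
  by apply/funext => x; rewrite mul0r.
exact: cvg_cst.
Qed.

Theorem corollary2p4 (R : realType) (d : nat) (hd : (3 <= d)%N)
  (D : set 'rV[R]_d) (hD : regular_domain D) :
  (forall (f : 'rV[R]_d -> \bar R) (h1 h2 k1 k2 : 'rV[R]_d -> R),
     harmonic_on D h1 -> harmonic_on D h2 ->
     (forall x, D x -> 0 <= k1 x) -> superharmonic_on D k1 ->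
     (forall x, D x -> 0 <= k2 x) -> superharmonic_on D k2 ->
     controlled_conv D f h1 k1 -> controlled_conv D f h2 k2 ->
     forall x, D x -> h1 x = h2 x) /\
  (forall (u k : 'rV[R]_d -> R),
     harmonic_on D u ->
     (forall x, D x -> 0 <= k x) -> superharmonic_on D k ->
     controlled_conv D (fun _ => 0%E) u k ->
     forall x, D x -> u x = 0).
Proof.
have i0 : 'I_d := Ordinal (leq_trans (isT : (0 < 3)%N) hd).
have P1 : forall (f : 'rV[R]_d -> \bar R) (h1 h2 k1 k2 : 'rV[R]_d -> R),
     harmonic_on D h1 -> harmonic_on D h2 ->
     (forall x, D x -> 0 <= k1 x) -> superharmonic_on D k1 ->
     (forall x, D x -> 0 <= k2 x) -> superharmonic_on D k2 ->
     controlled_conv D f h1 k1 -> controlled_conv D f h2 k2 ->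
     forall x, D x -> h1 x = h2 x.
  move=> f h1 h2 k1 k2 hh1 hh2 k10 sk1 k20 sk2 c1 c2 x Dx.
  apply/eqP; rewrite eq_le; apply/andP; split.
    apply: (@eps_le R (h1 x) (h2 x) (k1 x) (k2 x) (k10 x Dx) (k20 x Dx)) => eps eps0.
    exact: (main_ineq i0 hD hh1 hh2 k10 sk1 k20 sk2 c1 c2 eps0).
  apply: (@eps_le R (h2 x) (h1 x) (k2 x) (k1 x) (k20 x Dx) (k10 x Dx)) => eps eps0.
  exact: (main_ineq i0 hD hh2 hh1 k20 sk2 k10 sk1 c2 c1 eps0).
split => //.
move=> u k hu k0 sk cu x Dx.
exact: (P1 _ u (fun _ => 0) k k hu (@harmonic0 R d i0 D) k0 sk k0 sk cu (@ctrl0 R d D k) x Dx).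
Qed.
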